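(* Let $K'/K$ be a finite Galois extension inside $\bar K$. Suppose $M/K$ is obtained by nontrivial strong cluster magnification from a subextension $L/K$ with magnification factor $d$, and suppose $\tilde M$ and $K'$ are linearly disjoint over $K$. Then $MK'/K'$ is obtained by nontrivial strong cluster magnification from $LK'/K'$ with the same magnification factor $d$. Furthermore, $MK'/K$ is obtained by strong cluster magnification from $M/K$ and $LK'/K$ is obtained by strong cluster magnification from $L/K$, and these magnifications are nontrivial if $[K':K]>1$.
   Context: $K$ is a perfect field with a fixed algebraic closure $\bar K$; all extensions are finite and contained in $\bar K$; $\tilde L$ denotes the Galois closure of $L$ over the relevant base field in $\bar K$. Definition: for a base field $E$, $M/E$ is obtained by strong cluster magnification from a subextension $L/E$ ($E\subseteq L\subseteq M$) if $[L:E]>2$, and there is a finite Galois extension $F/E$ with the Galois closure of $L/E$ and $F$ linearly disjoint over $E$ and $LF=M$. $[F:E]$ is the magnification factor; the magnification is nontrivial if $F\ne E$. *)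

(* Defs.v *)
From HB Require Import structures.
From mathcomp Require Import all_boot all_order all_algebra all_fingroup all_solvable all_field.
Set Implicit Arguments. Unset Strict Implicit. Unset Printing Implicit Defensive.
Import GRing.Theory.
Local Open Scope ring_scope.

Definition perfect_field (F : fieldType) : Prop :=
  [pchar F] =i pred0 \/ exists2 p : nat, p \in [pchar F] & forall x : F, exists y : F, y ^+ p = x.

Section Magnification.
Variables (F0 : fieldType) (Om : splittingFieldType F0).

Definition gal_closure (E L : {subfield Om}) : {vspace Om} :=
  (\big[@prodv _ Om/1%VS]_(s in 'Gal({:Om} / E)%g) (s @: L))%VS.

Definition lin_disjoint (E : {subfield Om}) (A B : {vspace Om}) : bool :=
  \dim_E (A * B)%VS == (\dim_E A * \dim_E B)%N.

(* M/E is obtained by strong cluster magnification from L/E, witnessed by the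
   finite Galois extension Fw/E. *)
Definition scm_with (E L M Fw : {subfield Om}) : bool :=
  [&& (E <= L)%VS, (L <= M)%VS, (2 < \dim_E L)%N, galois E Fw,
      lin_disjoint E (gal_closure E L) Fw & ((L * Fw)%VS == M)].

Definition scm (E L M : {subfield Om}) : Prop :=
  exists Fw : {subfield Om}, scm_with E L M Fw.

Definition scm_factor (E L M : {subfield Om}) (d : nat) : Prop :=
  exists Fw : {subfield Om}, scm_with E L M Fw /\ \dim_E Fw = d.

Definition scm_nontrivial (E L M : {subfield Om}) : Prop :=
  exists Fw : {subfield Om}, scm_with E L M Fw /\ Fw != E.

Definition scm_nontrivial_factor (E L M : {subfield Om}) (d : nat) : Prop :=
  exists Fw : {subfield Om}, [/\ scm_with E L M Fw, Fw != E & \dim_E Fw = d].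
End Magnification.

(* Main.v *)
Require Import Defs.
From HB Require Import structures.
From mathcomp Require Import all_boot all_order all_algebra all_fingroup all_solvable all_field.
From mathcomp Require Import zify.
Import GRing.Theory.
Local Open Scope ring_scope.
Lemma arith (dA dA' e uA a x y w : nat) : (0 < e)%N -> (0 < a)%N ->
 dA = (a * dA')%N -> dA' = (x * e)%N -> dA = (uA * e)%N -> (uA * y * e <= a * (w * e))%N ->
 (w * e <= x * (y * e))%N -> w = (x * y)%N.
Proof.
move=> e0 a0 h1 h2 h3 k1 k2.
have hu : uA = a * x by apply/eqP; rewrite -(eqn_pmul2r e0) -h3 h1 h2 mulnA.
rewrite hu -!mulnA leq_pmul2l // mulnA leq_pmul2r // in k1.
rewrite mulnA leq_pmul2r // in k2.
by apply/eqP; rewrite eqn_leq k2 k1.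
Qed.

Section Aux.
Set Implicit Arguments.
Variables (F0 : fieldType) (Om : splittingFieldType F0).
Lemma prodv_suml_sub (I : Type) (r : seq I) (P : pred I) (U : I -> {vspace Om}) (C : {vspace Om}) :
  ((\sum_(i <- r | P i) U i) * C <= \sum_(i <- r | P i) (U i * C))%VS.
Proof.
elim/big_rec2: _ => [|i S T _ IH]; first by rewrite prod0v.
by rewrite prodvDl addvS.
Qed.
Lemma KL (F : {subfield Om}) (A C : {vspace Om}) :
  (F * A <= A)%VS -> (F * C <= C)%VS -> (\dim (A * C) <= \dim_F A * \dim C)%N.
Proof.
move=> modA modC.
have [X [sXA _] [defA _]] := field_module_semisimple modA.
rewrite -{1}defA.
apply: leq_trans; first apply: (dimvS (prodv_suml_sub _ _ _ _)).
apply: leq_trans; first apply: dimv_leq_sum.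
rewrite -[X in (_ <= X * _)%N](card_ord (\dim_F A)) -sum_nat_const.
apply: leq_sum => i _.
rewrite -prodvA prodvCA.
apply: leq_trans; first apply: (dimvS (prodvSr _ modC)).
apply: leq_trans; first apply: dim_prodv.
by rewrite dim_vline; case: (_ != 0); rewrite ?mul1n ?mul0n.
Qed.
Lemma SL (E A' : {subfield Om}) (A B : {subfield Om}) :
  (E <= A')%VS -> (A' <= A)%VS -> (E <= B)%VS ->
  lin_disjoint E A B -> lin_disjoint E A' B.
Proof.
move=> sEA' sA'A sEB /eqP hAB; apply/eqP.
have sEA := subv_trans sEA' sA'A.
have h1 := dim_sup_field sA'A.
have h2 := dim_sup_field sEA'.
have h3 := dim_sup_field sEB.
have sE_AB : (E <= A * B)%VS by apply: subv_trans sEA (field_subvMr _ _).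
have sE_A'B : (E <= A' * B)%VS by apply: subv_trans sEA' (field_subvMr _ _).
have h4 : \dim (A * B)%VS = (\dim_E (A * B)%VS * \dim E)%N := dim_sup_field sE_AB.
have h5 : \dim (A' * B)%VS = (\dim_E (A' * B)%VS * \dim E)%N := dim_sup_field sE_A'B.
have h6 := dim_sup_field sEA.
have eAA : (A * A')%VS = A by rewrite prodvC field_module_eq // sup_field_module.
have k1 : (\dim (A * B) <= \dim_A' A * \dim (A' * B))%N.
  have := @KL A' A (A' * B)%VS; rewrite [(A * (A' * B))%VS]prodvA eAA; apply; first by rewrite sup_field_module.
  by rewrite prodvA prodv_id.
have k2 : (\dim (A' * B) <= \dim_E A' * \dim B)%N.
  apply: KL; first by rewrite sup_field_module.
  by rewrite sup_field_module.
have e0 := adim_gt0 E.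
have a0 : (0 < \dim_A' A)%N by rewrite ltn_divRL ?field_dimS // mul0n adim_gt0.
rewrite h4 h5 hAB in k1; rewrite h5 h3 in k2.
exact: (arith _ _ _ _ _ _ _ _ e0 a0 h1 h2 h6 k1 k2).
Qed.
End Aux.

Import AEnd_FinGroup.
Section GalStuff.
Set Implicit Arguments.
Variables (F0 : fieldType) (Om : splittingFieldType F0).
Implicit Types (E L M K : {subfield Om}).

Lemma gal_closure_is_aspace E L : is_aspace (gal_closure E L).
Proof.
rewrite /gal_closure; elim/big_ind: _ => [|U V hU hV|s _].
- exact: (valP (1%AS : {subfield Om})).
- exact: (prodv_is_aspace (ASpace hU) (ASpace hV)).
- exact: (valP (s @: L)%AS).
Qed.

Definition GC E L : {subfield Om} := ASpace (gal_closure_is_aspace E L).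

Lemma GCE E L : (GC E L : {vspace Om}) = gal_closure E L.
Proof. by []. Qed.

Lemma gal_closure_factor E L (s : gal_of {:Om}) :
  s \in 'Gal({:Om} / E)%g -> (s @: L <= gal_closure E L)%VS.
Proof.
move=> hs; rewrite /gal_closure (bigD1 s) //=.
rewrite -{1}(prodv1 (s @: L)%VS); apply: prodvSr.
elim/big_ind: _ => [|U V hU hV|s' _] //.
- by rewrite -(prodv1 1%VS) prodvS.
- exact: (sub1v (s' @: L)%AS).
Qed.

Lemma limg_gal1 (L : {vspace Om}) : ((1%g : gal_of {:Om}) @: L)%VS = L.
Proof.
rewrite -{2}(lim1g L); apply: eq_in_limg => x _.
by rewrite gal_id id_lfunE.
Qed.

Lemma gal_closure_id E L : (L <= gal_closure E L)%VS.
Proof.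
have := @gal_closure_factor E L 1%g (group1 _).
by rewrite limg_gal1.
Qed.

Lemma gal_closureS E L M : (L <= M)%VS -> (gal_closure E L <= gal_closure E M)%VS.
Proof.
move=> sLM; rewrite /gal_closure.
elim/big_ind2: _ => [|U1 U2 V1 V2 h1 h2|s _] //.
- exact: prodvS.
- exact: limgS.
Qed.

Lemma limg_fix K (s : gal_of {:Om}) :
  s \in 'Gal({:Om} / K)%g -> (s @: K)%VS = K.
Proof.
move=> hs; rewrite -{2}(lim1g K); apply: eq_in_limg => x hx.
by rewrite id_lfunE (fixed_gal (subvf K) hs hx).
Qed.

Lemma gal_closure_prod K L :
  (gal_closure K (L * K)%AS <= GC 1%AS L * K)%VS.
Proof.
rewrite {1}/gal_closure; elim/big_ind: _ => [|U V hU hV|s hs].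
- exact: (sub1v (GC 1%AS L * K)%AS).
- exact: (prodv_sub hU hV).
- rewrite /= aimgM (@limg_fix K s hs); apply: prodvSl.
  apply: gal_closure_factor.
  by apply: (subsetP (galS _ (sub1v K))).
Qed.

Lemma galois_prod (K Fw : {subfield Om}) :
  galois 1%VS {:Om} -> galois 1%VS Fw -> galois K (Fw * K)%VS.
Proof.
move=> /and3P[_ sepOm _] /and3P[_ _ nF].
rewrite /galois field_subvMl /=.
apply/andP; split.
  exact: (separableSl (sub1v K) (separableSr (subvf _) sepOm)).
apply/forall_inP => x; rewrite inE kAutfE => hx.
rewrite aimgM.
have -> : (x @: K)%VS = K.
  rewrite -{2}(lim1g K); apply: eq_in_limg => y hy.
  by rewrite id_lfunE (kAHomP hx).
have hx1 : x \in kAEnd 1 {:Om} by rewrite inE kAutfE k1AHom.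
by rewrite (eqP (forall_inP nF x hx1)).
Qed.
End GalStuff.

Lemma dim1div (F0 : fieldType) (Om : splittingFieldType F0) (X : {vspace Om}) :
  \dim_(1%AS : {subfield Om}) X = \dim X.
Proof. by rewrite /= dimv1 divn1. Qed.

Theorem theorem8p2 (F0 : fieldType) (hperf : perfect_field F0)
  (Om : splittingFieldType F0) (hOm : galois 1%VS {:Om})
  (K' L M : {subfield Om}) (d : nat) :
  galois 1%VS K' ->
  scm_nontrivial_factor 1%AS L M d ->
  lin_disjoint 1%AS (gal_closure 1%AS M) K' ->
  [/\ scm_nontrivial_factor K' (L * K')%AS (M * K')%AS d,
      scm 1%AS M (M * K')%AS,
      scm 1%AS L (L * K')%AS &
      ((1 < \dim K')%N ->
         scm_nontrivial 1%AS M (M * K')%AS /\ scm_nontrivial 1%AS L (L * K')%AS)].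
Proof.
move=> hK' [Fw [hsc hne hd]] hdisj.
move: hsc => /and3P[_ sLM /and4P[hdimL hgalF hdisjLF /eqP eM]].
rewrite dim1div in hd hdimL.
set GM := GC 1%AS M.
set G1 := GC 1%AS L.
have sMGM : (M <= GM)%VS := gal_closure_id _ _.
have sLGM : (L <= GM)%VS := subv_trans sLM sMGM.
have sG1GM : (G1 <= GM)%VS by apply: gal_closureS.
have sFwM : (Fw <= M)%VS by rewrite -eM field_subvMl.
have hdisjM : lin_disjoint 1%AS GM K' := hdisj.
have dLK : lin_disjoint 1%AS L K'.
  apply: (SL _ _ _ _ _ sLGM _ hdisjM); exact: sub1v.
have dG1K : lin_disjoint 1%AS G1 K'.
  apply: (SL _ _ _ _ _ sG1GM _ hdisjM); exact: sub1v.
have sG1FwGM : ((G1 * Fw)%AS <= GM)%VS.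
  exact: (prodv_sub sG1GM (subv_trans sFwM sMGM)).
have dG1FwK : lin_disjoint 1%AS (G1 * Fw)%AS K'.
  apply: (SL _ _ _ _ _ sG1FwGM _ hdisjM); exact: sub1v.
move: dLK dG1K dG1FwK hdisjLF; rewrite /lin_disjoint !dim1div => /eqP dLK /eqP dG1K /eqP dG1FwK /eqP dG1Fw.
have g0 : (0 < \dim G1)%N := adim_gt0 _.
have f0 : (0 < \dim Fw)%N := adim_gt0 _.
have k0 : (0 < \dim K')%N := adim_gt0 _.
have eGY : ((G1 * Fw)%AS * K')%VS = (G1 * (Fw * K'))%VS by rewrite /= prodvA.
have eXF : ((G1 * Fw)%AS * K')%VS = ((G1 * K') * Fw)%VS by rewrite /= prodvAC.
have eXY : ((G1 * K') * (Fw * K'))%VS = ((G1 * Fw)%AS * K')%VS.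
  by rewrite /= [(Fw * K')%VS]prodvC prodvA -[(G1 * K' * K')%VS]prodvA prodv_id prodvAC.
rewrite dG1Fw in dG1FwK.
have dY : \dim (Fw * K') = (\dim Fw * \dim K')%N.
  apply/eqP; rewrite eqn_leq dim_prodv /=.
  have := dim_prodv G1 (Fw * K'); rewrite -eGY dG1FwK -mulnA leq_pmul2l //.
have dX : \dim (G1 * K') = (\dim G1 * \dim K')%N.
  apply/eqP; rewrite eqn_leq dim_prodv /=.
  have := dim_prodv (G1 * K') Fw; rewrite -eXF dG1FwK mulnAC.
  by rewrite leq_pmul2r.
have dY' : \dim_K' (Fw * K') = \dim Fw by rewrite dY mulnK.
have dX' : \dim_K' (G1 * K') = \dim G1 by rewrite dX mulnK.
have dXY : lin_disjoint K' (G1 * K')%AS (Fw * K')%AS.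
  apply/eqP; rewrite /= dX' dY' eXY dG1FwK mulnK //.
have sK'C : (K' <= GC K' (L * K')%AS)%VS.
  exact: (subv_trans (field_subvMl L K') (gal_closure_id _ _)).
have sCX : (GC K' (L * K')%AS <= (G1 * K')%AS)%VS := gal_closure_prod _ _.
have dCY : lin_disjoint K' (GC K' (L * K')%AS) (Fw * K')%AS.
  apply: (SL _ _ _ _ sK'C sCX _ dXY); exact: field_subvMl.
have dimL : (2 < \dim L)%N by move: hdimL; rewrite /= dimv1 divn1.
have f1 : (1 < \dim Fw)%N.
  rewrite ltn_neqAle f0 andbT; apply/negP => /eqP e1.
  move/negP: hne; apply; apply/eqP/val_inj => /=.
  apply/eqP; rewrite eq_sym eqEdim sub1v /= -e1 dimv1 //.
have k1ne : forall X : {subfield Om}, (1 < \dim X)%N -> X != 1%AS.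
  move=> X hX; apply/negP => /eqP eX; move: hX; rewrite eX /= dimv1 //.
split.
- exists (Fw * K')%AS; split.
  + apply/and3P; split; first exact: field_subvMl.
      exact: prodvSl.
    apply/and4P; split.
    * by rewrite /= dLK mulnK.
    * exact: galois_prod.
    * exact: dCY.
    * apply/eqP; rewrite /= -eM [(Fw * K')%VS]prodvC prodvA -[(L * K' * K')%VS]prodvA prodv_id; exact: prodvAC.
  + apply/negP => /eqP eY.
    have : \dim (Fw * K')%AS = \dim K' by rewrite eY.
    rewrite /= dY -{2}(mul1n (\dim K')) => /eqP; rewrite eqn_pmul2r // => /eqP e1.
    by rewrite e1 in f1.
  + by rewrite dY' hd.
- exists K'; apply/and3P; split; first exact: sub1v.
    exact: field_subvMr.
  apply/and4P; split => //.
  rewrite /= dimv1 divn1; apply: leq_trans dimL _; exact: dimvS.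
- exists K'; apply/and3P; split; first exact: sub1v.
    exact: field_subvMr.
  apply/and4P; split => //.
  by apply/eqP; rewrite /= !dimv1 !divn1.
- move=> hk; split.
  + exists K'; split; last exact: k1ne.
    apply/and3P; split; first exact: sub1v.
      exact: field_subvMr.
    apply/and4P; split => //.
    rewrite /= dimv1 divn1; apply: leq_trans dimL _; exact: dimvS.
  + exists K'; split; last exact: k1ne.
    apply/and3P; split; first exact: sub1v.
      exact: field_subvMr.
    apply/and4P; split => //.
    by apply/eqP; rewrite /= !dimv1 !divn1.
Qed.
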